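(* Let $\mathcal J\subseteq\mathbb R$ be an open interval, $\phi:\mathcal J\to\mathbb R$ three times continuously differentiable with $\phi''>0$, $K\ge1$, $\mathcal M=\mathcal J^K$, $h$ a primitive of $\sqrt{\phi''}$ with inverse $H=h^{-1}$ on $h(\mathcal J)$ (both applied componentwise to vectors), and $d_\phi(\boldsymbol x,\boldsymbol y)^2=\sum_{j=1}^K(h(x_j)-h(y_j))^2$. Let $P$ be a Borel probability measure on $\mathcal M$, $\boldsymbol X$ the identity map on $\mathcal M$, and assume $E[\|h(\boldsymbol X)\|^2]<\infty$. Let $\mathcal C=\{\boldsymbol y_1,\dots,\boldsymbol y_N\}\subset\mathcal M$ be a codebook of distinct points, let $S_i=\{\boldsymbol x\in\mathcal M: d_\phi(\boldsymbol x,\boldsymbol y_i)\le d_\phi(\boldsymbol x,\boldsymbol y_j)\ \forall j\}$ be the $d_\phi$-Voronoi cells, $B_i=\mathrm{int}(S_i)$, and assume $P(S_i\cap S_j)=0$ for $i\neq j$ and $P(S_i)>0$ for all $i$. Define $$\boldsymbol y_i^*=\frac{1}{P(S_i)}E_\phi[\boldsymbol X;S_i]:=H\Big(\frac{1}{P(S_i)}E[h(\boldsymbol X)\mathbf 1_{S_i}(\boldsymbol X)]\Big).$$ Then for all $i=1,\dots,N$, $$\boldsymbol y_i^*=\frac{1}{P(B_i)}E_\phi[\boldsymbol X;B_i]\in B_i\subset S_i,$$ where analogously $\frac{1}{P(B_i)}E_\phi[\boldsymbol X;B_i]=H\big(\frac{1}{P(B_i)}E[h(\boldsymbol X)\mathbf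 1_{B_i}(\boldsymbol X)]\big)$.
   Context: $\boldsymbol y_i^*$ is the $d_\phi$-centroid (the minimizer of $E[d_\phi(\boldsymbol X,\boldsymbol\xi)^2\mid \boldsymbol X\in S_i]$) of the cell $S_i$; the quantizer $q^*(\boldsymbol X)=\sum_i \boldsymbol y_i^*\mathbf 1_{S_i}(\boldsymbol X)$ minimizes the distortion $E[d_\phi(\boldsymbol X,q(\boldsymbol X))^2]$ among quantizers with the partition $\{S_i\}$. *)

(* Defs.v *)
From mathcomp Require Import all_boot all_order all_algebra.
From mathcomp Require Import all_classical all_reals all_analysis.
Import Order.TTheory GRing.Theory Num.Theory.
Import numFieldNormedType.Exports.

Set Implicit Arguments.
Unset Strict Implicit.
Unset Printing Implicit Defensive.

Local Open Scope ring_scope.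
Local Open Scope classical_set_scope.

(* The probability space is R^K realised as K.-tuple R with
   the library's product sigma-algebra (= Borel sigma-algebra of R^K);
   [tup2row] is the canonical identification, i.e. the random vector
   X is the identity map. *)
Definition tup2row (R : realType) (K : nat) (t : K.-tuple R) : 'rV[R]_K :=
  \row_j tnth t j.

Definition ev (R : realType) (K : nat) (A : set 'rV[R]_K) : set (K.-tuple R) :=
  (@tup2row R K) @^-1` A.

Definition cube (R : realType) (K : nat) (J : set R) : set 'rV[R]_K :=
  [set x | forall j, J (x ord0 j)].

Definition dphi (R : realType) (K : nat) (h : R -> R) (x y : 'rV[R]_K) : R :=
  Num.sqrt (\sum_(j < K) (h (x ord0 j) - h (y ord0 j)) ^+ 2).

Definition voronoi (R : realType) (K N : nat) (J : set R) (h : R -> R)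
    (y : 'I_N -> 'rV[R]_K) (i : 'I_N) : set 'rV[R]_K :=
  [set x | @cube R K J x /\ forall j : 'I_N, dphi h x (y i) <= dphi h x (y j)].

Definition phi_centroid (R : realType) (K : nat)
    (P : probability (K.-tuple R) R) (h H : R -> R) (A : set 'rV[R]_K)
    : 'rV[R]_K :=
  \row_j H ((fine (P (ev A)))^-1 *
            Rintegral P (ev A) (fun t => h (tnth t j))).

(* Main.v *)
Require Import Defs.
From mathcomp Require Import all_boot all_order all_algebra.
From mathcomp Require Import all_classical all_reals all_analysis.
From mathcomp Require Import ring lra measurable_realfun.
Import Order.TTheory GRing.Theory Num.Theory.
Import numFieldNormedType.Exports.
Local Open Scope ring_scope.
Local Open Scope classical_set_scope.

Section Cor.
Variables (R : realType) (J : set R) (h : R -> R) (K N : nat).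
Variable (P : probability (K.-tuple R) R).
Variable (y : 'I_N -> 'rV[R]_K).
Hypothesis oJ : open J.
Hypothesis hc : forall x, J x -> {for x, continuous h}.

Definition u (j : 'I_K) (t : K.-tuple R) : R := h (tnth t j).
Definition G (k : 'I_N) (x : 'rV[R]_K) : R :=
  \sum_j (h (x ord0 j) - h (y k ord0 j)) ^+ 2.
Definition Gt k (t : K.-tuple R) : R := \sum_j (u j t - h (y k ord0 j)) ^+ 2.

Lemma GtE k t : G k (tup2row t) = Gt k t.
Proof. by apply: eq_bigr => j _; rewrite /tup2row mxE. Qed.

Lemma G_ge0 k x : 0 <= G k x.
Proof. by apply: sumr_ge0 => j _; exact: sqr_ge0. Qed.

Lemma dphi_le k l x : (dphi h x (y k) <= dphi h x (y l)) = (G k x <= G l x).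
Proof. by rewrite /dphi ler_sqrt //; exact: G_ge0. Qed.

Lemma voronoiE k x : voronoi J h y k x <-> (cube J x /\ forall l, G k x <= G l x).
Proof.
rewrite /voronoi /=; split=> -[cx H]; split=> // l; first by rewrite -dphi_le.
by rewrite dphi_le.
Qed.

Lemma mcube : measurable (ev (@cube R K J)).
Proof.
have -> : ev (@cube R K J) = \bigcap_(j in [set: 'I_K]) ((fun t => tnth t j) @^-1` J).
  apply/seteqP; split=> t /=.
    by move=> ct j _; have := ct j; rewrite /tup2row mxE.
  by move=> ct j; rewrite /tup2row mxE; exact: ct.
apply: fin_bigcap_measurable; first exact: finite_finset.
move=> j _; rewrite -[X in measurable X]setTI.
apply: (measurable_tnth j) => //; exact: measurable_realfun.open_measurable.
Qed.

Lemma mu j : measurable_fun (ev (@cube R K J)) (u j).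
Proof.
apply: (@measurable_comp _ _ _ _ _ _ J h _ (fun t => tnth t j)).
- exact: measurable_realfun.open_measurable.
- by move=> _ [t ct <-]; have := ct j; rewrite /tup2row mxE.
- apply: measurable_realfun.open_continuous_measurable_fun => // x; rewrite inE; exact: hc.
- exact: measurable_funS (measurable_tnth j).
Qed.

Lemma mGt k : measurable_fun (ev (@cube R K J)) (Gt k).
Proof.
apply: measurable_sum => j; apply: measurable_funX.
by apply: measurable_funB => //; exact: mu.
Qed.

Hypothesis hint : (\int[P]_(t in ev (@cube R K J)) (\sum_(j < K) h (tnth t j) ^+ 2)%:E < +oo)%E.

Lemma mS k : measurable (ev (voronoi J h y k)).
Proof.
have -> : ev (voronoi J h y k) = ev (@cube R K J) `&`
    \bigcap_(l in [set: 'I_N]) (ev (@cube R K J) `&`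
       (fun t => Gt l t - Gt k t) @^-1` `[0, +oo[).
  apply/seteqP; split=> t.
    move=> /voronoiE [ct le]; split => // l _; split => //=.
    by rewrite in_itv /= andbT subr_ge0 -!GtE.
  move=> [ct H]; apply/voronoiE; split => // l.
  by have [_ /=] := H l I; rewrite in_itv /= andbT subr_ge0 -!GtE.
apply: measurableI; first exact: mcube.
apply: fin_bigcap_measurable; first exact: finite_finset.
move=> l _; apply: measurable_funB; [exact: mGt|exact: mGt|exact: mcube|].
exact: measurable_itv.
Qed.

Lemma intu j : P.-integrable (ev (@cube R K J)) (EFin \o u j).
Proof.
have mS2 : measurable_fun (ev (@cube R K J)) (fun t => \sum_(j < K) u j t ^+ 2).
  by apply: measurable_sum => i; apply: measurable_funX; exact: mu.
apply: (@le_integrable _ _ _ P _ mcube _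
   (fun t => (1 + \sum_(j < K) u j t ^+ 2)%:E)).
- by apply/measurable_EFinP; exact: mu.
- move=> t _ /=; rewrite lee_fin.
  have S0 : 0 <= \sum_(i < K) u i t ^+ 2 by apply: sumr_ge0 => i _; exact: sqr_ge0.
  rewrite [`|1 + _|]ger0_norm; last by rewrite addr_ge0.
  have : u j t ^+ 2 <= \sum_(i < K) u i t ^+ 2.
    rewrite (bigD1 j) //= lerDl; apply: sumr_ge0 => i _; exact: sqr_ge0.
  have := sqr_ge0 (`|u j t| - 1).
  rewrite -(@real_normK _ (u j t)) ?num_real //.
  have := normr_ge0 (u j t).
  nra.
- apply: (eq_integrable mcube (fun t => (1%:E + (\sum_(j < K) u j t ^+ 2)%:E)%E)).
    by move=> t _; rewrite EFinD.
  apply: (integrableD mcube); first exact: (finite_measure_integrable_cst P 1 mcube).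
  apply/integrableP; split; first by apply/measurable_EFinP.
  rewrite (eq_integral (fun t => (\sum_(j < K) u j t ^+ 2)%:E)); first exact: hint.
  move=> t _ /=; rewrite ger0_norm //.
  by apply: sumr_ge0 => i _; exact: sqr_ge0.
Qed.

Section Mean.
Variable D : set (K.-tuple R).
Hypothesis mD : measurable D.
Hypothesis sD : D `<=` ev (@cube R K J).

Lemma intD j : P.-integrable D (EFin \o u j).
Proof. exact: integrableS mcube mD sD (intu j). Qed.

Lemma intlin (w : 'I_K -> R) (s : seq 'I_K) :
  P.-integrable D (EFin \o (fun t => \sum_(j <- s) w j * u j t)) /\
  \int[P]_(t in D) (\sum_(j <- s) w j * u j t) =
    \sum_(j <- s) w j * \int[P]_(t in D) u j t.
Proof.
elim: s => [|j s [iS eS]].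
  have -> : (fun t => \sum_(j <- [::]) w j * u j t) = cst 0.
    by apply/funext => t; rewrite big_nil.
  split; first exact: (finite_measure_integrable_cst P 0 mD).
  by rewrite Rintegral_cst // mul0r big_nil.
have -> : (fun t => \sum_(i <- j :: s) w i * u i t) =
    (fun t => w j * u j t + \sum_(i <- s) w i * u i t).
  by apply/funext => t; rewrite big_cons.
have i1 : P.-integrable D (EFin \o (fun t => w j * u j t)).
  apply: (eq_integrable mD (fun t => ((w j)%:E * (EFin \o u j) t)%E)).
    by move=> t _; rewrite /= EFinM.
  exact: integrableZl (intD j).
split.
  apply: (eq_integrable mD (fun t => ((w j * u j t)%:E +
     (\sum_(i <- s) w i * u i t)%:E)%E)).
    by move=> t _; rewrite /= EFinD.
  exact: (integrableD mD i1 iS).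
rewrite RintegralD // RintegralZl //; last exact: intD.
by rewrite eS big_cons.
Qed.

Lemma Rint_lin (c : R) (w : 'I_K -> R) :
  \int[P]_(t in D) (c + \sum_j w j * u j t) =
    c * fine (P D) + \sum_j w j * \int[P]_(t in D) u j t.
Proof.
have [iS eS] := intlin w (index_enum 'I_K).
rewrite RintegralD //; last exact: (finite_measure_integrable_cst P c mD).
by rewrite Rintegral_cst // eS.
Qed.

Hypothesis pD : (0 < P D)%E.

Definition pp := fine (P D).
Definition m (j : 'I_K) := pp^-1 * \int[P]_(t in D) u j t.

Lemma pp_gt0 : 0 < pp.
Proof.
apply: fine_gt0; rewrite pD /=.
by have /fin_numPlt/andP[_ ->] := fin_num_measure P D mD.
Qed.

Lemma mean_affine (c : R) (w : 'I_K -> R)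
  (fge0 : forall t, D t -> 0 <= c + \sum_j w j * u j t) :
  0 <= c + \sum_j w j * m j /\
  (c + \sum_j w j * m j = 0 -> exists Z, [/\ measurable Z, P Z = 0%E &
      forall t, D t -> c + \sum_j w j * u j t != 0 -> Z t]).
Proof.
have p0 := pp_gt0.
have key : c + \sum_j w j * m j = pp^-1 * \int[P]_(t in D) (c + \sum_j w j * u j t).
  rewrite Rint_lin mulrDr mulr_sumr; congr (_ + _).
    by rewrite -/pp mulrC mulfK // gt_eqF.
  by apply: eq_bigr => j _; rewrite /m mulrCA.
rewrite key; split.
  by apply: mulr_ge0; [rewrite invr_ge0 ltW | exact: Rintegral_ge0].
move/eqP; rewrite mulf_eq0 invr_eq0 gt_eqF //= => /eqP I0.
have mf : measurable_fun D (fun t => c + \sum_j w j * u j t).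
  apply: measurable_funD => //; apply: measurable_sum => j.
  apply: measurable_funM => //; exact: measurable_funS mcube sD (mu j).
have intf : P.-integrable D (EFin \o (fun t => c + \sum_j w j * u j t)).
  have [iS _] := intlin w (index_enum 'I_K).
  apply: (eq_integrable mD (fun t => (c%:E + (\sum_j w j * u j t)%:E)%E)).
    by move=> t _; rewrite /= EFinD.
  exact: (integrableD mD (finite_measure_integrable_cst P c mD) iS).
have E0 : (\int[P]_(t in D) `|(c + \sum_j w j * u j t)%:E|)%E = 0%E.
  rewrite (eq_integral (fun t => (c + \sum_j w j * u j t)%:E)); last first.
    move=> t; rewrite inE => Dt; rewrite gee0_abs // lee_fin; exact: fge0.
  move: I0; rewrite /Rintegral => I0.
  rewrite -[LHS]fineK ?I0 //; exact: integrable_fin_num intf.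
have /(ae_eq_integral_abs P mD (f := fun t => (c + \sum_j w j * u j t)%:E)) := E0.
move=> /(_ (proj2 (measurable_EFinP _ _) mf))[Z [mZ PZ sub]].
exists Z; split => // t Dt ft; apply: sub => /= /(_ Dt) /=.
by move=> [] /eqP; rewrite (negbTE ft).
Qed.

Lemma no_pos (c : R) (w : 'I_K -> R) :
  (forall t, D t -> 0 < c + \sum_j w j * u j t) ->
  c + \sum_j w j * m j = 0 -> False.
Proof.
move=> fgt0 L0.
have [_ /(_ L0) [Z [mZ PZ sub]]] := mean_affine c w (fun t Dt => ltW (fgt0 t Dt)).
have : (P D <= P Z)%E.
  apply: le_measure; rewrite ?inE //.
  by move=> t Dt; apply: sub => //; rewrite gt_eqF // fgt0.
by rewrite PZ; move/(lt_le_trans pD); rewrite ltxx.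
Qed.

Lemma sum_delta (F : 'I_K -> R) j : \sum_l (l == j)%:R * F l = F j.
Proof.
rewrite (bigD1 j) //= eqxx mul1r big1 ?addr0 // => l /negbTE ->.
by rewrite mul0r.
Qed.

Lemma m_lo j : exists t, D t /\ u j t <= m j.
Proof.
apply/not_existsP => H.
apply: (@no_pos (- m j) (fun l => (l == j)%:R)).
  move=> t Dt; rewrite sum_delta addrC subr_gt0 ltNge; apply/negP => le.
  by apply: (H t).
by rewrite sum_delta addNr.
Qed.

Lemma m_hi j : exists t, D t /\ m j <= u j t.
Proof.
apply/not_existsP => H.
apply: (@no_pos (m j) (fun l => - (l == j)%:R)).
  move=> t Dt; under eq_bigr do rewrite mulNr.
  rewrite sumrN sum_delta subr_gt0 ltNge; apply/negP => le.
  by apply: (H t).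
by under eq_bigr do rewrite mulNr; rewrite sumrN sum_delta subrr.
Qed.

End Mean.
Hypothesis iJ : is_interval J.
Hypothesis hinc : forall a b, J a -> J b -> a < b -> h a < h b.

Lemma ivt a b v : J a -> J b -> h a <= v -> v <= h b -> exists2 c, J c & h c = v.
Proof.
move=> Ja Jb hav hvb.
have ab : a <= b.
  rewrite leNgt; apply/negP => ba.
  by have := le_trans hav hvb; rewrite leNgt (hinc _ _ Jb Ja ba).
have sub : forall z, z \in `[a, b]%R -> J z.
  by move=> z; rewrite in_itv /= => zab; apply: (iJ a b Ja Jb).
have [c cab hcv] : exists2 c, c \in `[a, b]%R & h c = v.
  apply: IVT => //.
  apply: continuous_in_subspaceT => z; rewrite inE /= => zab.
  by apply: hc; apply: sub.
  by rewrite ge_min hav /= le_max hvb orbT.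
by exists c => //; apply: sub.
Qed.

Lemma m_J D (mD : measurable D) (sD : D `<=` ev (@cube R K J)) (pD : (0 < P D)%E) j :
  exists2 x, J x & h x = m D j.
Proof.
have [t1 [D1 le1]] := @m_lo D mD sD pD j.
have [t2 [D2 le2]] := @m_hi D mD sD pD j.
apply: (ivt _ _ _ _ _ le1 le2).
- by have := sD t1 D1 j; rewrite /tup2row mxE.
- by have := sD t2 D2 j; rewrite /tup2row mxE.
Qed.

Hypothesis hnull : forall i j, i != j ->
     P (ev (voronoi J h y i `&` voronoi J h y j)) = 0%E.
Hypothesis hpos : forall i, (0 < P (ev (voronoi J h y i)))%E.

Lemma quad_id (a b v : 'I_K -> R) :
  \sum_j (v j - b j) ^+ 2 - \sum_j (v j - a j) ^+ 2 =
  \sum_j (b j ^+ 2 - a j ^+ 2) + \sum_j (2 * (a j - b j)) * v j.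
Proof. by rewrite -sumrB -big_split; apply: eq_bigr => j _ /=; ring. Qed.

Lemma sDs i : ev (voronoi J h y i) `<=` ev (@cube R K J).
Proof. by move=> t /voronoiE[]. Qed.

Lemma bis i k (x : 'rV[R]_K) : k != i ->
  (forall j, h (x ord0 j) = m (ev (voronoi J h y i)) j) -> G i x < G k x.
Proof.
move=> ki hx.
pose a := fun j => h (y i ord0 j).
pose b := fun j => h (y k ord0 j).
pose c := \sum_j (b j ^+ 2 - a j ^+ 2).
pose w := fun j => 2 * (a j - b j).
have Ef t : c + \sum_j w j * u j t = Gt k t - Gt i t.
  by rewrite (quad_id a b (fun j => u j t)).
have fge0 : forall t, ev (voronoi J h y i) t -> 0 <= c + \sum_j w j * u j t.
  move=> t /voronoiE [_ le]; rewrite Ef subr_ge0 -!GtE; exact: le.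
have [L0 Leq] := @mean_affine (ev (voronoi J h y i)) (mS i) (@sDs i) (hpos i) c w fge0.
have EL : c + \sum_j w j * m (ev (voronoi J h y i)) j = G k x - G i x.
  rewrite /G (quad_id a b (fun j => h (x ord0 j))).
  by congr (_ + _); apply: eq_bigr => j _; rewrite hx.
rewrite -subr_gt0 lt_def -EL L0 andbT; apply/negP => /eqP /Leq [Z [mZ PZ sub]].
have : (P (ev (voronoi J h y i)) <= P (Z `|` ev (voronoi J h y i `&` voronoi J h y k)))%E.
  apply: le_measure; [rewrite inE; exact: mS| |].
    by rewrite inE; apply: measurableU => //; apply: measurableI; exact: mS.
  move=> t Dt; have [f0|fn0] := eqVneq (c + \sum_j w j * u j t) 0; last by left; exact: sub.
  right; split => //; apply/voronoiE; move: Dt => /voronoiE [ct le]; split => // l.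
  move: f0; rewrite Ef => /eqP; rewrite subr_eq0 => /eqP; rewrite -!GtE => ->; exact: le.
have mI : measurable (ev (voronoi J h y i `&` voronoi J h y k)).
  by apply: measurableI; exact: mS.
move=> /le_trans /(_ (measureU2 P mZ mI)) H.
have H2 : (P Z + P (ev (voronoi J h y i `&` voronoi J h y k)) = 0)%E.
  by rewrite PZ hnull 1?eq_sym // adde0.
have : (P (ev (voronoi J h y i)) <= 0)%E.
  apply: (le_trans H); rewrite -H2; exact: lexx.
by move/(lt_le_trans (hpos i)); rewrite ltxx.
Qed.

Lemma Gcont k (x : 'rV[R]_K) : @cube R K J x -> G k z @[z --> x] --> G k x.
Proof.
move=> cx; rewrite /G.
apply: (@cvg_big _ _ +%R 0 xpredT add_continuous); first exact: nbhs_filter.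
move=> j _.
have cj : (fun z : 'rV[R]_K => h (z ord0 j) - h (y k ord0 j)) @ x -->
    h (x ord0 j) - h (y k ord0 j).
  apply: (@cvgB _ _ _ _ _ (fun z : 'rV[R]_K => h (z ord0 j))
     (cst (h (y k ord0 j)))); [exact: nbhs_filter| |exact: (@cvg_cst _ _ _ _ (nbhs_filter x))].
  apply: (@continuous_comp _ _ _ (fun M : 'rV[R]_K => M ord0 j) h x).
    exact: coord_continuous.
  exact: hc (cx j).
have -> : (fun z : 'rV[R]_K => (h (z ord0 j) - h (y k ord0 j)) ^+ 2) =
   (fun z : 'rV[R]_K => (h (z ord0 j) - h (y k ord0 j)) * (h (z ord0 j) - h (y k ord0 j))).
  by apply/funext => z; rewrite expr2.
rewrite expr2; apply: (cvgM cj cj).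
Qed.

Lemma int_of i (x : 'rV[R]_K) : @cube R K J x ->
  (forall k, k != i -> G i x < G k x) -> (voronoi J h y i)° x.
Proof.
move=> cx lt.
have cJ : nbhs x [set z : 'rV[R]_K | forall j, J (z ord0 j)].
  apply: (@filter_forall _ _ (fun j (z : 'rV[R]_K) => J (z ord0 j)) _ (nbhs_filter x)) => j.
  apply: (@coord_continuous R 1 K ord0 j x).
  by apply: open_nbhs_nbhs; split => //; exact: cx j.
have hall : nbhs x [set z : 'rV[R]_K | forall l, G i z <= G l z].
  apply: (@filter_forall _ _ (fun l (z : 'rV[R]_K) => G i z <= G l z) _ (nbhs_filter x)) => l.
  have [->|li] := eqVneq l i.
    by apply: filterE => z; exact: lexx.
  have cD : (fun z => G l z - G i z) @ x --> G l x - G i x.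
    apply: (@cvgB _ _ _ _ _ (G l) (G i)); [exact: nbhs_filter|exact: Gcont|exact: Gcont].
  have := @cvgr_gt _ _ _ (nbhs_filter x) _ _ cD 0; rewrite subr_gt0 => /(_ (lt l li)).
  by apply: filterS => z; rewrite subr_gt0 => /ltW.
apply: filterS2 cJ hall => z cz hz; apply/voronoiE; split => //.
Qed.

Hypothesis yinj : injective y.
Hypothesis ycube : forall i, @cube R K J (y i).

Lemma quad_diff (a b v v' : 'I_K -> R) j : (forall l, l != j -> v l = v' l) ->
  (\sum_l (v l - a l) ^+ 2 - \sum_l (v l - b l) ^+ 2) -
  (\sum_l (v' l - a l) ^+ 2 - \sum_l (v' l - b l) ^+ 2) =
  2 * (b j - a j) * (v j - v' j).
Proof.
move=> e.
rewrite -!sumrB (bigD1 j) //= big1 ?addr0; first by ring.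
by move=> l /e ->; rewrite subrr.
Qed.

Lemma not_int i k (x : 'rV[R]_K) : k != i -> voronoi J h y i x ->
  G i x = G k x -> ~ (voronoi J h y i)° x.
Proof.
move=> ki /voronoiE [cx _] Ge [Ps Pn Psub].
have [j abj] : exists j, h (y i ord0 j) != h (y k ord0 j).
  apply/not_existsP => H; move/eqP: ki; apply; apply: yinj; apply/rowP => l.
  have /negP := H l; rewrite negbK => /eqP hl.
  have [lt1|lt1|//] := ltgtP (y k 0 l) (y i 0 l).
    by have := hinc _ _ (ycube k l) (ycube i l) lt1; rewrite hl ltxx.
  by have := hinc _ _ (ycube i l) (ycube k l) lt1; rewrite hl ltxx.
move/nbhs_ballP: (Pn ord0 j) => [eps /= eps0 sub_eps].
have main : forall s, `|s| < eps -> J (x ord0 j + s) /\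
    2 * (h (y k ord0 j) - h (y i ord0 j)) * (h (x ord0 j + s) - h (x ord0 j)) <= 0.
  move=> s seps.
  pose z := x + s *: delta_mx 0 j.
  have zE : forall l, z ord0 l = x ord0 l + (if l == j then s else 0).
    move=> l; rewrite !mxE eqxx /=; case: (l == j); by rewrite ?mulr1 ?mulr0.
  have Sz : voronoi J h y i z.
    apply: Psub => i0 l; rewrite (ord1 i0) zE.
    case: eqP => [->|_]; last by rewrite addr0; exact: nbhs_singleton (Pn ord0 l).
    apply: sub_eps; rewrite -ball_normE /ball_ /= opprD addrA subrr add0r normrN //.
  move/voronoiE: Sz => [cz le]; split; first by have := cz j; rewrite zE eqxx.
  have := quad_diff (fun l => h (y i ord0 l)) (fun l => h (y k ord0 l))
     (fun l => h (z ord0 l)) (fun l => h (x ord0 l)) j.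
  rewrite /= zE eqxx => <-; last first.
    by move=> l /negbTE lj; rewrite zE lj addr0.
  rewrite -/(G i z) -/(G k z) -/(G i x) -/(G k x) Ge subrr subr0 subr_le0.
  exact: le k.
have [ab|ba|eab] := ltgtP (h (y k ord0 j)) (h (y i ord0 j)); last first.
  by rewrite eab eqxx in abj.
- have e2 : `|eps / 2| < eps.
    by rewrite ger0_norm ?divr_ge0 ?ltW // ltr_pdivrMr // ltr_pMr // ltr1n.
  have [Jz le0] := main (eps / 2) e2.
  have xl : x ord0 j < x ord0 j + eps / 2 by rewrite ltrDl divr_gt0.
  have := hinc _ _ (cx j) Jz xl.
  rewrite -subr_gt0 => hpos'.
  have : 0 < 2 * (h (y k ord0 j) - h (y i ord0 j)) * (h (x ord0 j + eps / 2) - h (x ord0 j)).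
    by apply: mulr_gt0 => //; apply: mulr_gt0 => //; rewrite subr_gt0.
  by rewrite ltNge le0.
- have e2 : `|- (eps / 2)| < eps.
    by rewrite normrN ger0_norm ?divr_ge0 ?ltW // ltr_pdivrMr // ltr_pMr // ltr1n.
  have [Jz le0] := main (- (eps / 2)) e2.
  have xl : x ord0 j - eps / 2 < x ord0 j by rewrite gtrDl oppr_lt0 divr_gt0.
  have := hinc _ _ Jz (cx j) xl.
  rewrite -subr_lt0 => hneg.
  have : 0 < 2 * (h (y k ord0 j) - h (y i ord0 j)) * (h (x ord0 j - eps / 2) - h (x ord0 j)).
    by rewrite -mulrA pmulr_rgt0 // nmulr_rgt0 // subr_lt0.
  by rewrite ltNge le0.
Qed.

Definition Zs i := \big[setU/set0]_(k <- index_enum 'I_N | k != i)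
  ev (voronoi J h y i `&` voronoi J h y k).

Lemma Zs_mem i t : Zs i t <-> exists k, k != i /\ ev (voronoi J h y i `&` voronoi J h y k) t.
Proof.
rewrite /Zs -bigcup_seq_cond; split => [[k /andP[_ ki] Ft]|[k [ki Ft]]].
  by exists k.
by exists k => //; rewrite /= mem_index_enum ki.
Qed.

Lemma mZs i : measurable (Zs i).
Proof.
rewrite /Zs -bigcup_seq_cond; apply: fin_bigcup_measurable; first exact: finite_finset.
by move=> k _; apply: measurableI; exact: mS.
Qed.

Lemma PZs i : P (Zs i) = 0%E.
Proof.
have : P.-negligible (Zs i).
  rewrite /Zs; elim: (index_enum _) => [|k s IH]; rewrite ?big_nil ?big_cons.
    exact: negligible_set0.
  case: ifPn => ki //; apply: negligibleU => //.
  exists (ev (voronoi J h y i `&` voronoi J h y k)); split => //.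
    by apply: measurableI; exact: mS.
  by apply: hnull; rewrite eq_sym.
case=> A [mA PA sub]; apply/eqP; rewrite eq_le measure_ge0 andbT -PA.
by apply: le_measure; rewrite ?inE //; exact: mZs.
Qed.

Lemma evB i : ev ((voronoi J h y i)°) = ev (voronoi J h y i) `\` Zs i.
Proof.
apply/seteqP; split => t.
  move=> Bt; have St : voronoi J h y i (tup2row t) := interior_subset Bt.
  split => //; move/Zs_mem => [k [ki [_ Skt]]].
  have [_ le1] := (voronoiE _ _).1 St; have [_ le2] := (voronoiE _ _).1 Skt.
  apply: (@not_int i k (tup2row t) ki St _ Bt); apply/eqP; rewrite eq_le le1 le2.
  done.
move=> [St nZ]; have [cx le] := (voronoiE _ _).1 St; apply: int_of => // k ki.
rewrite lt_def le andbT; apply/negP => /eqP Gki; apply: nZ; apply/Zs_mem.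
exists k; split => //; split => //; apply/voronoiE; split => // l.
by rewrite Gki; exact: le.
Qed.

Lemma PevB i : P (ev ((voronoi J h y i)°)) = P (ev (voronoi J h y i)).
Proof.
rewrite evB measureD //; last 3 first.
- exact: mS.
- exact: mZs.
- by have /fin_numPlt/andP[_ ->] := fin_num_measure P _ (mS i).
have le0 : (P (ev (voronoi J h y i) `&` Zs i) <= P (Zs i))%E.
  apply: le_measure; rewrite ?inE //; first by apply: measurableI; [exact: mS|exact: mZs].
  exact: mZs.
rewrite [X in (_ - X)%E](_ : _ = 0%E); first by rewrite sube0.
apply/eqP; rewrite eq_le measure_ge0 andbT; by apply: (le_trans le0); rewrite PZs.

Qed.

Lemma RintB i j : \int[P]_(t in ev ((voronoi J h y i)°)) h (tnth t j) =
   \int[P]_(t in ev (voronoi J h y i)) h (tnth t j).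
Proof.
rewrite evB /Rintegral; congr fine.
rewrite [RHS](@negligible_integral _ _ _ P _ (Zs i)) //.
- exact: mZs.
- exact: mS.
- exact: (@intD _ (mS i) (@sDs i) j).
- exact: PZs.
Qed.

Variable H : R -> R.
Hypothesis HK : forall x, J x -> H (h x) = x.

Lemma main_sec i :
    let S := voronoi J h y i in
    let B := interior S in
    (0 < P (ev B))%E /\
    phi_centroid P h H S = phi_centroid P h H B /\
    B (phi_centroid P h H S) /\
    B `<=` S.
Proof.
move=> S B.
have [xs hxs] : {xs : 'I_K -> R & forall j, J (xs j) /\ h (xs j) = m (ev S) j}.
  apply: (@choice _ _ (fun j x => J x /\ h x = m (ev S) j)) => j.
  have [x Jx hx] := @m_J (ev S) (mS i) (@sDs i) (hpos i) j.
  by exists x.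
pose x := \row_j xs j.
have cx : @cube R K J x by move=> j; rewrite mxE; exact: (hxs j).1.
have Ex : phi_centroid P h H S = x.
  apply/rowP => j; rewrite !mxE; have [Jx hx] := hxs j.
  have -> : (fine (P (ev S)))^-1 * \int[P]_(t in ev S) h (tnth t j) = m (ev S) j by [].
  by rewrite -hx HK.
split; first by rewrite /B PevB; exact: hpos.
split.
  apply/rowP => j; rewrite !mxE /B PevB RintB //.
split; last exact: interior_subset.
rewrite Ex; apply: int_of => // k ki; apply: bis => // j.
by rewrite mxE; exact: (hxs j).2.
Qed.

End Cor.

Theorem corollary1 (R : realType) (J : set R) (phi h H : R -> R) (K N : nat)
    (P : probability (K.-tuple R) R) (y : 'I_N -> 'rV[R]_K) :
  (* J is an open interval *)
  is_interval J -> open J ->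
  (* phi is C^3 on J *)
  (forall x, J x -> forall k, (k < 3)%N -> derivable (derive1n k phi) x 1) ->
  (forall x, J x -> {for x, continuous (derive1n 3 phi)}) ->
  (* phi'' > 0 on J *)
  (forall x, J x -> 0 < derive1n 2 phi x) ->
  (* K >= 1 *)
  (1 <= K)%N ->
  (* h is a primitive of sqrt(phi'') on J, H its inverse on h(J) *)
  (forall x, J x -> is_derive x 1 h (Num.sqrt (derive1n 2 phi x))) ->
  (forall x, J x -> H (h x) = x) ->
  (* P is a probability on M = J^K *)
  P (ev (@cube R K J)) = 1%E ->
  (* E ||h(X)||^2 < oo *)
  (\int[P]_(t in ev (@cube R K J)) (\sum_(j < K) h (tnth t j) ^+ 2)%:E < +oo)%E ->
  (* codebook of distinct points of M *)
  injective y -> (forall i, @cube R K J (y i)) ->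
  (* P(S_i /\ S_j) = 0 for i <> j, P(S_i) > 0 *)
  (forall i j, i != j ->
     P (ev (voronoi J h y i `&` voronoi J h y j)) = 0%E) ->
  (forall i, (0 < P (ev (voronoi J h y i)))%E) ->
  forall i : 'I_N,
    let S := voronoi J h y i in
    let B := interior S in
    (0 < P (ev B))%E /\
    phi_centroid P h H S = phi_centroid P h H B /\
    B (phi_centroid P h H S) /\
    B `<=` S.
Proof.
move=> iJ oJ _ _ phi2 _ hder HK _ hint yinj ycube hnull hpos i.
have hc : forall x, J x -> {for x, continuous h}.
  move=> x Jx; apply: differentiable_continuous.
  by apply/derivable1_diffP; case: (hder x Jx).
have hinc : forall a b, J a -> J b -> a < b -> h a < h b.
  move=> a b Ja Jb ab.
  have sub : forall z, a <= z <= b -> J z by move=> z; exact: iJ a b Ja Jb z.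
  apply: (@gtr0_derive1_incr R h a b) => //.
  - move=> z; rewrite in_itv /= => /andP[az zb].
    have Jz : J z by apply: sub; rewrite !ltW.
    by case: (hder z Jz).
  - move=> z; rewrite in_itv /= => /andP[az zb].
    have Jz : J z by apply: sub; rewrite !ltW.
    case: (hder z Jz) => _ dv.
    by rewrite derive1E dv sqrtr_gt0 phi2.
  - apply: continuous_in_subspaceT => z; rewrite inE /= in_itv /= => zab.
    exact: hc (sub z zab).
exact: (@main_sec R J h K N P y oJ hc hint iJ hinc hnull hpos yinj ycube H HK i).
Qed.
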